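(* Consider the chain pendulum on a cart described in the context, and an equilibrium specified by $s=(s_1,\dots,s_n)\in\{1,-1\}^n$, namely $q_i=s_ie_3$, $\omega_i=0$ for all $i$, and $x=0$, $\dot x=0$. Parametrize perturbations by $x=\epsilon\,\delta x$, $q_i=\exp(\epsilon\hat\xi_i)s_ie_3$, $\omega_i=\epsilon\,\delta\omega_i$ with $\delta x\in\mathbb{R}^2$, $\xi_i,\delta\omega_i\in\mathbb{R}^3$, $\xi_i\cdot e_3=\delta\omega_i\cdot e_3=0$, and set $\mathbf{x}_q=[C^T\xi_1;\dots;C^T\xi_n]\in\mathbb{R}^{2n}$, $\mathbf{x}=[\delta x;\mathbf{x}_q]\in\mathbb{R}^{2n+2}$. Then the linearization of the equations of motion about this equilibrium is \[ \mathbf{M}\ddot{\mathbf{x}}+\mathbf{G}\mathbf{x}=\mathbf{B}u,\qquad \mathbf{M}=\begin{bmatrix}\mathbf{M}_{xx}&\mathbf{M}_{xq}\\ \mathbf{M}_{qx}&\mathbf{M}_{qq}\end{bmatrix},\quad \mathbf{G}=\begin{bmatrix}0_{2}&0_{2\times2n}\\0_{2n\times2}&\mathbf{G}_{qq}\end{bmatrix},\quad \mathbf{B}=\begin{bmatrix}I_2\\0_{2n\times2}\end{bmatrix}, \] where $\mathbf{M}_{xx}=M_{00}I_2$, $\mathbf{M}_{xq}=\big[-s_1M_{01}\hat e_3C,\ -s_2M_{02}\hat e_3C,\ \dots,\ -s_nM_{0n}\hat e_3C\big]\in\mathbb{R}^{2\times2n}$, $\mathbf{M}_{qx}=\mathbf{M}_{xq}^T$,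 $\mathbf{M}_{qq}\in\mathbb{R}^{2n\times2n}$ is the block matrix whose $(i,j)$ $2\times2$ block is $s_is_jM_{ij}I_2$ (so the diagonal blocks are $M_{ii}I_2$), and $\mathbf{G}_{qq}=\mathrm{diag}\big[s_1\big(\sum_{a=1}^n m_a\big)g\,l_1I_2,\ \dots,\ s_i\big(\sum_{a=i}^n m_a\big)g\,l_iI_2,\ \dots,\ s_nm_ng\,l_nI_2\big]$.
   Context: Let $n\ge1$. $\mathsf{S}^2=\{q\in\mathbb{R}^3:\|q\|=1\}$. Let $e_1,e_2,e_3$ be the standard basis of $\mathbb{R}^3$, with $e_3$ the direction of gravity, $g>0$ the gravitational acceleration, and $C=[e_1,e_2]\in\mathbb{R}^{3\times2}$. For $y\in\mathbb{R}^3$, $\hat y$ denotes the $3\times3$ skew-symmetric matrix with $\hat y z=y\times z$; $\exp$ is the matrix exponential. A cart of mass $m>0$ with position $x\in\mathbb{R}^2$ moves in a horizontal plane under a control force $u\in\mathbb{R}^2$; a serial chain of $n$ links with spherical joints is attached, link $i$ having length $l_i>0$, direction $q_i\in\mathsf{S}^2$, point mass $m_i>0$ at its outboard end, and angular velocity $\omega_i\in\mathbb{R}^3$ with $\omega_i\cdot q_i=0$. Define $M_{00}=m+\sum_{i=1}^n m_i$, $M_{0i}=\big(\sum_{a=i}^n m_a\big)l_iC^T\in\mathbb{R}^{2\times3}$, $M_{i0}=M_{0i}^T$, $M_{ij}=\big(\sum_{a=\max\{i,j\}}^n m_a\big)l_il_j$. The equations of motion (the Euler–Lagrange equations for the Lagrangian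 $L=\tfrac12M_{00}\|\dot x\|^2+\dot x\cdot\sum_iM_{0i}\dot q_i+\tfrac12\sum_{i,j}M_{ij}\dot q_i\cdot\dot q_j+\sum_i(\sum_{a=i}^n m_a)g\,l_i\,e_3\cdot q_i$ with force $u$ on the cart) are $M_{00}\ddot x-\sum_{j=1}^n M_{0j}\hat q_j\dot\omega_j=\sum_{j=1}^n M_{0j}\|\omega_j\|^2q_j+u$; for $i=1,\dots,n$: $\hat q_iM_{i0}\ddot x+M_{ii}\dot\omega_i-\sum_{j\neq i}M_{ij}\hat q_i\hat q_j\dot\omega_j=\sum_{j\neq i}M_{ij}\|\omega_j\|^2\hat q_iq_j+\big(\sum_{a=i}^n m_a\big)g\,l_i\,\hat q_ie_3$; and $\dot q_i=\omega_i\times q_i$. *)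

(* Defs.v *)
From HB Require Import structures.
From mathcomp Require Import all_boot all_order all_algebra.
From mathcomp Require Import all_classical all_reals all_analysis.
Set Implicit Arguments. Unset Strict Implicit. Unset Printing Implicit Defensive.
Import Order.TTheory GRing.Theory Num.Theory.
Import numFieldNormedType.Exports.
Local Open Scope ring_scope.

Section ChainPendulum.
Variable R : realType.

Definition e3 : 'cV[R]_3 := \col_(i < 3) (i == 2%N :> nat)%:R.
Definition Cmx : 'M[R]_(3, 2) := \matrix_(i < 3, j < 2) (i == j :> nat)%:R.

(* hat map: hat y z = y \times z *)
Definition hat (y : 'cV[R]_3) : 'M[R]_3 :=
  let a := y 0 0 in let b := y 1 0 in let c := y 2%:R 0 in
  \matrix_(i < 3, j < 3)
    nth 0 (nth [::] [:: [:: 0; - c; b]; [:: c; 0; - a]; [:: - b; a; 0]] i) j.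

Definition dotv (y z : 'cV[R]_3) : R := (y^T *m z) 0 0.
Definition sqnorm (y : 'cV[R]_3) : R := dotv y y.

Definition expm (A : 'M[R]_3) : 'M[R]_3 :=
  limn (series (fun k : nat => (k`!%:R)^-1 *: A ^+ k)).

Variables (n : nat) (m g : R) (ms l : 'I_n -> R).

(* sum_{a = i}^{n} m_a  (0-based indices) *)
Definition msum (i : 'I_n) : R := \sum_(a < n | (i <= a)%N) ms a.
Definition M00 : R := m + \sum_(a < n) ms a.
Definition M0 (i : 'I_n) : 'M[R]_(2, 3) := (msum i * l i) *: Cmx^T.
Definition Mi0 (i : 'I_n) : 'M[R]_(3, 2) := (M0 i)^T.
Definition Mij (i j : 'I_n) : R :=
  (\sum_(a < n | (i <= a)%N && (j <= a)%N) ms a) * l i * l j.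

(* residual (LHS - RHS) of the cart equation of motion *)
Definition cart_res (xdd : 'cV[R]_2) (q w wd : 'I_n -> 'cV[R]_3) (u : 'cV[R]_2)
  : 'cV[R]_2 :=
  M00 *: xdd - \sum_(j < n) (M0 j *m hat (q j) *m wd j)
  - (\sum_(j < n) (sqnorm (w j) *: (M0 j *m q j)) + u).

(* residual (LHS - RHS) of the i-th link equation of motion *)
Definition rot_res (i : 'I_n) (xdd : 'cV[R]_2) (q w wd : 'I_n -> 'cV[R]_3)
  : 'cV[R]_3 :=
  hat (q i) *m Mi0 i *m xdd + Mij i i *: wd i
  - \sum_(j < n | j != i) (Mij i j *: (hat (q i) *m hat (q j) *m wd j))
  - (\sum_(j < n | j != i) ((Mij i j * sqnorm (w j)) *: (hat (q i) *m q j))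
     + (msum i * g * l i) *: (hat (q i) *m e3)).

Variables (s : 'I_n -> R) (dx : R -> 'cV[R]_2) (xi dw : 'I_n -> R -> 'cV[R]_3)
  (du : R -> 'cV[R]_2).

Definition qpert (i : 'I_n) (eps t : R) : 'cV[R]_3 :=
  expm (eps *: hat (xi i t)) *m (s i *: e3).

(* first-order (in eps) terms of the equations of motion along the
   perturbation x = eps dx, q_i = qpert, omega_i = eps dw_i, u = eps du *)
Definition lin_cart (t : R) : 'cV[R]_2 :=
  derive1 (fun eps : R =>
    cart_res (eps *: derive1 (derive1 dx) t) (fun i => qpert i eps t)
      (fun i => eps *: dw i t) (fun i => eps *: derive1 (dw i) t) (eps *: du t)) 0.

Definition lin_rot (i : 'I_n) (t : R) : 'cV[R]_3 :=
  derive1 (fun eps : R =>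
    rot_res i (eps *: derive1 (derive1 dx) t) (fun j => qpert j eps t)
      (fun j => eps *: dw j t) (fun j => eps *: derive1 (dw j) t)) 0.

(* linearized kinematics  d/dt (delta q_i) = delta (omega_i x q_i) *)
Definition lin_kin (i : 'I_n) (t : R) : Prop :=
  derive1 (fun t' => derive1 (fun eps => qpert i eps t') 0) t =
  derive1 (fun eps => hat (eps *: dw i t) *m qpert i eps t) 0.

Definition bx (t : R) : 'cV[R]_(2 + \sum_(i < n) 2) :=
  col_mx (dx t) (\mxcol_(i < n) (Cmx^T *m xi i t)).

Definition Mxx : 'M[R]_2 := M00%:M.
Definition Mxq : 'M[R]_(2, \sum_(i < n) 2) :=
  \mxrow_(j < n) (- (s j) *: (M0 j *m hat e3 *m Cmx)).
Definition Mqx : 'M[R]_(\sum_(i < n) 2, 2) := Mxq^T.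
Definition Mqq : 'M[R]_(\sum_(i < n) 2) :=
  \mxblock_(i < n, j < n) ((s i * s j * Mij i j)%:M : 'M[R]_2).
Definition Mbig : 'M[R]_(2 + \sum_(i < n) 2) := block_mx Mxx Mxq Mqx Mqq.
Definition Gqq : 'M[R]_(\sum_(i < n) 2) :=
  \mxdiag_(i < n) ((s i * msum i * g * l i)%:M : 'M[R]_2).
Definition Gbig : 'M[R]_(2 + \sum_(i < n) 2) := block_mx 0 0 0 Gqq.
Definition Bbig : 'M[R]_(2 + \sum_(i < n) 2, 2) := col_mx 1%:M 0.

End ChainPendulum.

(* Main.v *)
Require Import Defs.
From HB Require Import structures.
From mathcomp Require Import all_boot all_order all_algebra.
From mathcomp Require Import all_classical all_reals all_analysis.
From mathcomp Require Import ring lra.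
Import Order.TTheory GRing.Theory Num.Theory.
Import numFieldNormedType.Exports.
Local Open Scope classical_set_scope.
Local Open Scope ring_scope.
Set Implicit Arguments. Unset Strict Implicit. Unset Printing Implicit Defensive.

Section Aux.
Variable R : realType.

Lemma is_derive_mx p q (M : R -> 'M[R]_(p, q)) (x : R) (D : 'M[R]_(p,q)) :
  (forall i j, is_derive x 1 (fun e => M e i j) (D i j)) -> is_derive x 1 M D.
Proof.
move=> H.
have dM : derivable M x 1 by apply/derivable_mxP => i j; have [] := H i j.
apply: DeriveDef => //; rewrite derive_mx //; apply/matrixP => i j.
by rewrite mxE; have [_ ->] := H i j.
Qed.

Lemma is_derive_mxE p q (M : R -> 'M[R]_(p, q)) (x : R) (D : 'M[R]_(p,q)) :
  is_derive x 1 M D -> forall i j, is_derive x 1 (fun e => M e i j) (D i j).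
Proof.
move=> [dM dv] i j.
have := dM; move/derivable_mxP => /(_ i j) dij.
apply: DeriveDef => //.
by rewrite -dv derive_mx // mxE.
Qed.


Lemma is_derive_fun_ext (V : normedModType R) (f g : R -> V) (x : R) (d : V) :
  f = g -> is_derive x 1 f d -> is_derive x 1 g d.
Proof. by move=> ->. Qed.

Lemma is_derive_mulmx p q r (F : R -> 'M[R]_(p, q)) (G : R -> 'M[R]_(q, r)) (x : R) dF dG :
  is_derive x 1 F dF -> is_derive x 1 G dG ->
  is_derive x 1 (fun e => F e *m G e) (dF *m G x + F x *m dG).
Proof.
move=> hF hG; apply: is_derive_mx => i j.
have -> : (fun e => (F e *m G e) i j) = \sum_(k < q) ((fun e => F e i k) * (fun e => G e k j)).
  by apply/funext => e; rewrite mxE fct_sumE.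
rewrite !mxE -big_split /=.
apply: is_derive_sum => k.
have h := is_deriveM (is_derive_mxE hF i k) (is_derive_mxE hG k j).
apply: is_derive_eq h _.
by rewrite /= /GRing.scale /= mulrC [X in _ + X]mulrC addrC.
Qed.

Lemma is_derive_scalemx p q (a : R -> R) (F : R -> 'M[R]_(p, q)) (x : R) da dF :
  is_derive x 1 a da -> is_derive x 1 F dF ->
  is_derive x 1 (fun e => a e *: F e) (da *: F x + a x *: dF).
Proof.
move=> ha hF; apply: is_derive_mx => i j.
have -> : (fun e => (a e *: F e) i j) = a * (fun e => F e i j).
  by apply/funext => e; rewrite mxE.
rewrite !mxE.
have h := is_deriveM ha (is_derive_mxE hF i j).
apply: is_derive_eq h _.
by rewrite /GRing.scale /= [F x i j * _]mulrC addrC.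
Qed.


Lemma is_derive_lin p q p' q' (L : 'M[R]_(p, q) -> 'M[R]_(p', q'))
  (HL : forall a u v, L (a *: u + v) = a *: L u + L v)
  (F : R -> 'M[R]_(p, q)) (x : R) dF :
  is_derive x 1 F dF -> is_derive x 1 (fun e => L (F e)) (L dF).
Proof.
move=> hF.
have L0 : L 0 = 0.
  have := HL 1 0 0; rewrite scaler0 addr0 scale1r.
  by move=> /(congr1 (fun z => z - L 0)); rewrite subrr addrK.
have Lsum : forall (I : finType) (f : I -> 'M[R]_(p, q)), L (\sum_i f i) = \sum_i L (f i).
  move=> I f; apply: (big_rec2 (fun a b => L a = b)) => // i a b _ <-.
  by rewrite -{1}[f i]scale1r HL scale1r.
have LZ : forall a u, L (a *: u) = a *: L u.
  by move=> a u; rewrite -[a *: u]addr0 HL L0 addr0.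
have LE : forall M : 'M[R]_(p, q), L M = \sum_(k < p) \sum_(l < q) M k l *: L (delta_mx k l).
  move=> M; rewrite {1}(matrix_sum_delta M) Lsum; apply: eq_bigr => k _.
  by rewrite Lsum; apply: eq_bigr => l _; rewrite LZ.
apply: is_derive_mx => i j.
have -> : (fun e => L (F e) i j) = \sum_(k < p) \sum_(l < q) ((fun e => F e k l) * cst (L (delta_mx k l) i j)).
  apply/funext => e; rewrite LE !summxE !fct_sumE; apply: eq_bigr => k _.
  by rewrite summxE fct_sumE; apply: eq_bigr => l _; rewrite mxE.
rewrite LE summxE; apply: is_derive_sum => k; rewrite summxE; apply: is_derive_sum => l.
have h := is_deriveM (is_derive_mxE hF k l) (is_derive_cst (L (delta_mx k l) i j) x 1).
apply: is_derive_eq h _.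
by rewrite mxE /GRing.scale /= mulr0 add0r mulrC.
Qed.


Definition Hm (a b c : R) : 'M[R]_3 :=
  \matrix_(i < 3, j < 3)
    nth 0 (nth [::] [:: [:: 0; - c; b]; [:: c; 0; - a]; [:: - b; a; 0]] i) j.

Lemma hatHm y : hat y = Hm (y 0 0) (y 1 0) (y 2%:R 0).
Proof. by []. Qed.

Lemma Hm3 a b c : Hm a b c ^+ 3 = - (a ^+ 2 + b ^+ 2 + c ^+ 2) *: Hm a b c.
Proof.
rewrite !exprS expr0 mulr1 -!mulmxE; apply/matrixP => i j.
rewrite !(mxE, big_ord_recl, big_ord0) /=.
by case: i => [[|[|[|i]]] hi] //; case: j => [[|[|[|j]]] hj] //=; ring.
Qed.


Section ExpmH.
Variables (H : 'M[R]_3) (N : R).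
Hypotheses (hN0 : 0 <= N) (H3 : H ^+ 3 = - N *: H) (HN : N = 0 -> H = 0).

Lemma HX j : H ^+ (j.*2.+1) = (- N) ^+ j *: H /\ H ^+ (j.*2.+2) = (- N) ^+ j *: H ^+ 2.
Proof.
elim: j => [|j [IH1 IH2]]; first by rewrite !expr0 !scale1r.
have E1 : H ^+ (j.+1.*2.+1) = (- N) ^+ j.+1 *: H.
  rewrite doubleS (_ : j.*2.+3 = j.*2.+1 + 2)%N; last by rewrite addn2.
  by rewrite exprD IH1 -scalerAl -exprS H3 scalerA -exprSr.
split => //.
by rewrite doubleS exprSr E1 -scalerAl -expr2.
Qed.

Let r := Num.sqrt N.

Lemma term_id (eps : R) (k : nat) :
  (k`!%:R)^-1 *: (eps *: H) ^+ k =
  (sin_coeff (eps * r) k / r) *: H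
  + (((k == 0)%N%:R - cos_coeff (eps * r) k) / N) *: H ^+ 2
  + (k == 0)%N%:R *: 1.
Proof.
case: k => [|k].
  by rewrite /sin_coeff /cos_coeff /= !expr0 !mul1r !mulr1 invr1 !mul0r !scale0r subrr mul0r scale0r !add0r !scale1r.
have [N0|Nn0] := eqVneq N 0.
  rewrite /r N0 HN // sqrtr0 invr0 !mulr0 scaler0 expr0n /= scaler0 !scale0r.
  by rewrite !addr0.
have rn0 : r != 0 by rewrite /r sqrtr_eq0 -ltNge lt_neqAle eq_sym Nn0 hN0.
have rr : r ^+ 2 = N by rewrite /r sqr_sqrtr.
have fk : ((k.+1)`!)%:R != 0 :> R by rewrite pnatr_eq0 -lt0n fact_gt0.
have [ok|ek] := boolP (odd k).
- have -> : k.+1 = (k./2).*2.+2 by rewrite -[in LHS](odd_double_half k) ok.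
  set j := k./2.
  rewrite exprZn; have [_ ->] := HX j.
  rewrite /sin_coeff /cos_coeff /= odd_double /=.
  rewrite !mul0r scale0r add0r scale0r addr0 !scalerA -exprnP doubleK; congr (_ *: _).
  have fj : ((j.*2.+2)`!)%:R != 0 :> R by rewrite pnatr_eq0 -lt0n fact_gt0.
  rewrite exprMn (_ : r ^+ (j.*2.+2) = N ^+ j.+1); last first.
    by rewrite -mul2n -add2n -mulnS exprM rr.
  rewrite exprNn !exprS.
  by field; rewrite fj Nn0.
- have -> : k.+1 = (k./2).*2.+1 by rewrite -[in LHS](odd_double_half k) (negbTE ek).
  set j := k./2.
  rewrite exprZn; have [-> _] := HX j.
  rewrite /sin_coeff /cos_coeff /= odd_double /=.
  rewrite !mul0r subrr mul0r scale0r scale0r !addr0 !scalerA doubleK; congr (_ *: _).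
  have fj : ((j.*2.+1)`!)%:R != 0 :> R by rewrite pnatr_eq0 -lt0n fact_gt0.
  rewrite exprMn (_ : r ^+ (j.*2.+1) = N ^+ j * r); last first.
    by rewrite exprS -mul2n exprM rr mulrC.
  rewrite exprNn.
  rewrite expr1n mulr1 [(- N) ^+ j]exprNn.
  by field; rewrite fj rn0.
Qed.

Lemma comb3 (a b c a' b' c' : R) (A B C : 'M[R]_3) :
  a *: A + b *: B + c *: C + (a' *: A + b' *: B + c' *: C) =
  (a + a') *: A + (b + b') *: B + (c + c') *: C.
Proof. by rewrite addrACA [a *: A + _ + _]addrACA !scalerDl. Qed.

Lemma series_delta K : series (fun k : nat => (k == 0)%N%:R : R) K.+1 = 1.
Proof.
elim: K => [|K IH]; first by rewrite seriesS /series /= big_geq // addr0.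
by rewrite seriesS IH /= add0r.
Qed.

Lemma expm_closed (eps : R) :
  expm (eps *: H) = 1 + (sin (eps * r) / r) *: H + ((1 - cos (eps * r)) / N) *: H ^+ 2.
Proof.
rewrite /expm; apply: cvg_lim => //.
set x := eps * r.
set d := (fun k : nat => (k == 0)%N%:R : R).
have -> : series (fun k : nat => (k`!%:R)^-1 *: (eps *: H) ^+ k) =
  (fun K => (series (sin_coeff x) K / r) *: H
     + ((series d K - series (cos_coeff x) K) / N) *: H ^+ 2 + series d K *: 1).
  apply/funext => K; elim: K => [|K IH].
    by rewrite /series /= !big_geq // !mul0r subrr mul0r !scale0r !addr0.
  rewrite !seriesS IH term_id comb3; congr (_ *: _ + _ *: _ + _ *: _).
  - by rewrite mulrDl.
  - by rewrite /d; ring.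
have cs : series (sin_coeff x) @ \oo --> sin x.
  by rewrite unlock; exact: is_cvg_series_sin_coeff.
have cc : series (cos_coeff x) @ \oo --> cos x.
  by rewrite unlock; exact: is_cvg_series_cos_coeff.
have cd : series d @ \oo --> (1 : R).
  rewrite -cvg_shiftS; apply: cvg_near_cst; near=> K.
  by rewrite /= series_delta.
have -> : 1 + (sin x / r) *: H + ((1 - cos x) / N) *: H ^+ 2 =
  (sin x / r) *: H + ((1 - cos x) / N) *: H ^+ 2 + 1 *: 1.
  by rewrite scale1r [RHS]addrC addrA.
apply: cvgD; last exact: cvgZr_tmp.
apply: cvgD; apply: cvgZr_tmp; first exact: cvgMr_tmp.
by apply: cvgMr_tmp; apply: cvgB.
Unshelve. all: by end_near.
Qed.

Lemma is_derive_mulr_cst (c x : R) : is_derive x 1 (fun e : R => e * c) c.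
Proof.
have h := is_deriveM (is_derive_id x 1) (is_derive_cst c x 1).
apply: is_derive_eq h _.
by rewrite /GRing.scale /= mulr0 add0r mulr1.
Qed.

Lemma expm_derive : is_derive (0 : R) 1 (fun eps => expm (eps *: H)) H.
Proof.
have [N0|Nn0] := eqVneq N 0.
  rewrite HN //; apply: (is_derive_fun_ext (f := cst (expm 0))).
    by apply/funext => e; rewrite scaler0.
have rn0 : r != 0 by rewrite /r sqrtr_eq0 -ltNge lt_neqAle eq_sym Nn0 hN0.
apply: (is_derive_fun_ext (f := fun eps => 1 + (sin (eps * r) / r) *: H + ((1 - cos (eps * r)) / N) *: H ^+ 2)).
  by apply/funext => e; rewrite expm_closed.
have ha : is_derive (0:R) 1 (fun e => sin (e * r) / r) 1.
  have h1 := @is_derive1_comp _ sin (fun e => e * r) 0 _ _ (is_derive_sin (0 * r)) (is_derive_mulr_cst r 0).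
  have h2 := is_deriveM h1 (is_derive_cst (r^-1) (0:R) 1).
  apply: is_derive_eq h2 _.
  by rewrite /GRing.scale /= mulr0 add0r mul0r cos0 mul1r mulVf.
have hb : is_derive (0:R) 1 (fun e => (1 - cos (e * r)) / N) 0.
  have h1 := @is_derive1_comp _ cos (fun e => e * r) 0 _ _ (is_derive_cos (0 * r)) (is_derive_mulr_cst r 0).
  have h2 := is_deriveM (is_deriveB (is_derive_cst (1:R) (0:R) 1) h1) (is_derive_cst (N^-1) (0:R) 1).
  apply: is_derive_eq h2 _.
  by rewrite /GRing.scale /= mulr0 add0r mul0r sin0 oppr0 mul0r subr0 mulr0.
have h := is_deriveD (is_deriveD (is_derive_cst (1:'M[R]_3) (0:R) 1) (is_derive_scalemx ha (is_derive_cst H (0:R) 1)))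
  (is_derive_scalemx hb (is_derive_cst (H ^+ 2) (0:R) 1)).
apply: is_derive_eq h _.
by rewrite /= !scaler0 !addr0 scale1r scale0r addr0 add0r.
Qed.

Lemma expm0 : expm (0 *: H) = 1.
Proof. by rewrite expm_closed !mul0r sin0 cos0 subrr !mul0r !scale0r !addr0. Qed.

End ExpmH.


Implicit Types y : 'cV[R]_3.

Lemma ord3_1 : lift ord0 ord0 = 1 :> 'I_3. Proof. exact: val_inj. Qed.
Lemma ord3_2 : lift ord0 (lift ord0 ord0) = 2%:R :> 'I_3. Proof. exact: val_inj. Qed.

Lemma dotvE (y z : 'cV[R]_3) : dotv y z = y 0 0 * z 0 0 + y 1 0 * z 1 0 + y 2%:R 0 * z 2%:R 0.
Proof. by rewrite /dotv !(mxE, big_ord_recl, big_ord0) ord3_1 ord3_2 addr0 addrA. Qed.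

Lemma e3E : e3 R = \col_(i < 3) (i == 2%N :> nat)%:R. Proof. by []. Qed.

Lemma dotv_e3 (y : 'cV[R]_3) : dotv y (e3 R) = y 2%:R 0.
Proof. by rewrite dotvE !mxE /= !mulr0 mulr1 !add0r. Qed.

Lemma hat_cube y : hat y ^+ 3 = - sqnorm y *: hat y.
Proof. by rewrite hatHm Hm3 /sqnorm dotvE !expr2. Qed.

Lemma sqnorm_ge0 y : 0 <= sqnorm y.
Proof. by rewrite /sqnorm dotvE -!expr2 !addr_ge0 ?sqr_ge0. Qed.

Lemma sqnorm0 y : sqnorm y = 0 -> hat y = 0.
Proof.
rewrite /sqnorm dotvE -!expr2 => /eqP.
rewrite paddr_eq0 ?addr_ge0 ?sqr_ge0 // paddr_eq0 ?sqr_ge0 // !sqrf_eq0.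
move=> /andP[/andP[/eqP a /eqP b] /eqP c].
rewrite hatHm a b c; apply/matrixP => i j; rewrite !mxE.
by case: i => [[|[|[|i]]] hi] //; case: j => [[|[|[|j]]] hj] //=; rewrite ?oppr0.
Qed.

Lemma hat_lin a (u v : 'cV[R]_3) : hat (a *: u + v) = a *: hat u + hat v.
Proof.
rewrite !hatHm; apply/matrixP => i j; rewrite !mxE.
by case: i => [[|[|[|i]]] hi] //; case: j => [[|[|[|j]]] hj] //=; rewrite ?mxE; ring.
Qed.

Lemma expm_hat_derive y : is_derive (0:R) 1 (fun eps => expm (eps *: hat y)) (hat y).
Proof. exact: (expm_derive (sqnorm_ge0 y) (hat_cube y) (@sqnorm0 y)). Qed.

Lemma expm_hat0 y : expm (0 *: hat y) = 1.
Proof. exact: (expm0 (sqnorm_ge0 y) (hat_cube y) (@sqnorm0 y)). Qed.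


Lemma is_derive_hat (F : R -> 'cV[R]_3) (x : R) dF :
  is_derive x 1 F dF -> is_derive x 1 (fun e => hat (F e)) (hat dF).
Proof. exact: (is_derive_lin hat_lin). Qed.

Lemma is_derive_tr p q (F : R -> 'M[R]_(p, q)) (x : R) dF :
  is_derive x 1 F dF -> is_derive x 1 (fun e => (F e)^T) dF^T.
Proof. by apply: is_derive_lin => a u v; rewrite linearP. Qed.

Lemma is_derive_sid p q (v : 'M[R]_(p, q)) (x : R) : is_derive x 1 (fun e => e *: v) v.
Proof.
have h := is_derive_scalemx (is_derive_id x 1) (is_derive_cst v x 1).
apply: is_derive_eq h _.
by rewrite scale1r scaler0 addr0.
Qed.

Lemma is_derive_if (V : normedModType R) (b : bool) (f : R -> V) (x : R) df :
  is_derive x 1 f df -> is_derive x 1 (fun e => if b then f e else 0) (if b then df else 0).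
Proof. by case: b => // _; exact: is_derive_cst. Qed.

Lemma is_derive_sqnorm (w : 'cV[R]_3) : is_derive (0:R) 1 (fun e => sqnorm (e *: w)) 0.
Proof.
have h := is_derive_mxE (is_derive_mulmx (is_derive_tr (is_derive_sid w 0)) (is_derive_sid w 0)) 0 0.
apply: is_derive_eq h _.
by rewrite !scale0r trmx0 mulmx0 mul0mx addr0 mxE.
Qed.

Lemma mxdiff_cst p q (A : 'M[R]_(p, q)) (x : R) : is_derive x 1 (fun _ => A) 0.
Proof. exact: is_derive_cst. Qed.

Lemma der_of p q (F : R -> 'M[R]_(p, q)) (t : R) :
  derivable F t 1 -> is_derive t 1 F (derive1 F t).
Proof. by move=> /derivableP; rewrite derive1E. Qed.

Lemma hat0 : hat (0 : 'cV[R]_3) = 0.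
Proof. by apply: sqnorm0; rewrite /sqnorm /dotv mulmx0 mxE. Qed.

Lemma hat_e3_inj (a : R) y z : a != 0 -> hat y *m (a *: e3 R) = hat z *m (a *: e3 R) ->
  y 2%:R 0 = z 2%:R 0 -> y = z.
Proof.
move=> a0 E y2.
have E0 := congr1 (fun M : 'cV[R]_3 => M 0 0) E.
have E1 := congr1 (fun M : 'cV[R]_3 => M 1 0) E.
move: E0 E1; rewrite /= !hatHm !(mxE, big_ord_recl, big_ord0) /= ?mxE /= => E0 E1.
apply/matrixP => i j; rewrite (ord1 j).
move: E0 E1; rewrite !(mulr0, mul0r, mulr1, add0r, addr0) => /(mulIf a0) E0 /(mulIf a0)/oppr_inj E1.
case: i => [[|[|[|i]]] hi] //.
- by rewrite (_ : Ordinal hi = 0); last exact: val_inj.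
- by rewrite (_ : Ordinal hi = 1); last exact: val_inj.
- by rewrite (_ : Ordinal hi = 2%:R); last exact: val_inj.
Qed.

Lemma comp3_zero (F : R -> 'cV[R]_3) (t : R) : derivable F t 1 ->
  (forall e, F e 2%:R 0 = 0) -> derive1 F t 2%:R 0 = 0.
Proof.
move=> dF F0.
have h := is_derive_mxE (der_of dF) 2%:R 0.
case: h => _ <-.
have -> : (fun e => F e 2%:R 0) = cst 0 by apply/funext => e; rewrite F0.
by rewrite derive_cst.
Qed.

Lemma ord3_0 : ord0 = 0 :> 'I_3. Proof. exact: val_inj. Qed.

Lemma ord3_ind (P : 'I_3 -> Prop) : P 0 -> P 1 -> P 2%:R -> forall i, P i.
Proof.
move=> P0 P1 P2 [[|[|[|i]]] hi] //.
- by rewrite (_ : Ordinal hi = 0) //; exact: val_inj.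
- by rewrite (_ : Ordinal hi = 1) //; exact: val_inj.
- by rewrite (_ : Ordinal hi = 2%:R) //; exact: val_inj.
Qed.

Lemma CCt (z : 'cV[R]_3) : z 2%:R 0 = 0 -> Cmx R *m ((Cmx R)^T *m z) = z.
Proof.
move=> z2; apply/matrixP => i j; rewrite (ord1 j).
rewrite !(mxE, big_ord_recl, big_ord0) /= ?ord3_0 ?ord3_1 ?ord3_2.
elim/ord3_ind: i => /=; rewrite ?mxE /=; try ring.
by rewrite z2; ring.
Qed.

Lemma P1 (k a : R) : Cmx R *m (- a *: ((k *: (Cmx R)^T) *m hat (e3 R) *m Cmx R))^T
  = hat (a *: e3 R) *m (k *: (Cmx R)^T)^T.
Proof.
apply/matrixP => i j; rewrite !hatHm !(mxE, big_ord_recl, big_ord0) /=.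
elim/ord3_ind: i; case: j => [[|[|j]] hj] //=; rewrite ?mxE /=; ring.
Qed.

Lemma P2 (a b : R) (z : 'cV[R]_3) : z 2%:R 0 = 0 ->
  hat (a *: e3 R) *m hat (b *: e3 R) *m z = - (a * b) *: z.
Proof.
move=> z2; apply/matrixP => i j; rewrite (ord1 j) !hatHm.
rewrite !(mxE, big_ord_recl, big_ord0) /= ?ord3_0 ?ord3_1 ?ord3_2.
elim/ord3_ind: i => /=; rewrite ?mxE /= ?z2; ring.
Qed.

Lemma P3 (a : R) (z : 'cV[R]_3) : z 2%:R 0 = 0 ->
  hat (hat z *m (a *: e3 R)) *m e3 R = - a *: z.
Proof.
move=> z2; apply/matrixP => i j; rewrite (ord1 j) !hatHm.
rewrite !(mxE, big_ord_recl, big_ord0) /= ?ord3_0 ?ord3_1 ?ord3_2.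
elim/ord3_ind: i => /=; rewrite ?mxE /= ?z2; ring.
Qed.

Lemma CtC : (Cmx R)^T *m Cmx R = 1%:M.
Proof.
apply/matrixP => i j; rewrite !(mxE, big_ord_recl, big_ord0) /=.
by case: i => [[|[|i]] hi] //; case: j => [[|[|j]] hj] //=; rewrite ?mxE /=; ring.
Qed.

Section Main.
Variables (n : nat) (m g : R) (ms l s : 'I_n -> R) (dx : R -> 'cV[R]_2)
  (xi dw : 'I_n -> R -> 'cV[R]_3) (du : R -> 'cV[R]_2).

Lemma qpert_derive i t :
  is_derive (0:R) 1 (fun eps => qpert s xi i eps t) (hat (xi i t) *m (s i *: e3 R)).
Proof.
have h := is_derive_mulmx (expm_hat_derive (xi i t)) (mxdiff_cst (s i *: e3 R) 0).
apply: is_derive_eq h _.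
by rewrite mulmx0 addr0.
Qed.

Lemma qpert0 i t : qpert s xi i 0 t = s i *: e3 R.
Proof. by rewrite /qpert expm_hat0 mul1mx. Qed.

Lemma lin_cart_val t :
  lin_cart m ms l s dx xi dw du t =
  M00 m ms *: derive1 (derive1 dx) t
  - \sum_(j < n) (M0 ms l j *m hat (s j *: e3 R) *m derive1 (dw j) t) - du t.
Proof.
rewrite /lin_cart derive1E.
set xdd := derive1 (derive1 dx) t.
set Wd := fun j => derive1 (dw j) t.
have h1 := is_deriveZ (M00 m ms) (is_derive_sid xdd 0).
have h2 := fun j => is_derive_mulmx
  (is_derive_mulmx (mxdiff_cst (M0 ms l j) 0) (is_derive_hat (qpert_derive j t)))
  (is_derive_sid (Wd j) 0).
have h3 := fun j => is_derive_scalemx (is_derive_sqnorm (dw j t))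
  (is_derive_mulmx (mxdiff_cst (M0 ms l j) 0) (qpert_derive j t)).
have h4 := is_derive_sid (du t) 0.
have h := is_deriveB (is_deriveB h1 (is_derive_sum h2)) (is_deriveD (is_derive_sum h3) h4).
have -> : (fun eps => cart_res m ms l (eps *: xdd) (fun i => qpert s xi i eps t)
      (fun i => eps *: dw i t) (fun i => eps *: Wd i) (eps *: du t)) =
  (M00 m ms *: (fun e => e *: xdd) - \sum_(j < n) (fun e => M0 ms l j *m hat (qpert s xi j e t) *m (e *: Wd j))
   - (\sum_(j < n) (fun e => sqnorm (e *: dw j t) *: (M0 ms l j *m qpert s xi j e t)) + (fun e => e *: du t))).
  apply/funext => e; rewrite /cart_res /= !fct_sumE.
  by [].
rewrite (@derive_val _ _ _ _ _ _ _ h).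
have sq0 : forall w : 'cV[R]_3, sqnorm (0 *: w) = 0.
  by move=> w; rewrite /sqnorm /dotv scale0r mulmx0 mxE.
rewrite [X in _ - (X + _)]big1 ?add0r; last by move=> j _; rewrite sq0 !scale0r addr0.
congr (_ - _ - _); apply: eq_bigr => j _.
by rewrite scale0r mulmx0 add0r qpert0.
Qed.
Lemma lin_rot_val i t :
  lin_rot g ms l s dx xi dw i t =
  hat (s i *: e3 R) *m Mi0 ms l i *m derive1 (derive1 dx) t
  + Mij ms l i i *: derive1 (dw i) t
  - \sum_(j < n | j != i) (Mij ms l i j *: (hat (s i *: e3 R) *m hat (s j *: e3 R) *m derive1 (dw j) t))
  - (Defs.msum ms i * g * l i) *: (hat (hat (xi i t) *m (s i *: e3 R)) *m e3 R).
Proof.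
rewrite /lin_rot derive1E.
set xdd := derive1 (derive1 dx) t.
set Wd := fun j => derive1 (dw j) t.
have k1 := is_derive_mulmx (is_derive_mulmx (is_derive_hat (qpert_derive i t))
   (mxdiff_cst (Mi0 ms l i) 0)) (is_derive_sid xdd 0).
have k2 := is_deriveZ (Mij ms l i i) (is_derive_sid (Wd i) 0).
have k3 := fun j => is_derive_if (j != i) (is_deriveZ (Mij ms l i j)
  (is_derive_mulmx (is_derive_mulmx (is_derive_hat (qpert_derive i t))
     (is_derive_hat (qpert_derive j t))) (is_derive_sid (Wd j) 0))).
have k4 := fun j => is_derive_if (j != i) (is_derive_scalemx
  (is_deriveZ (Mij ms l i j) (is_derive_sqnorm (dw j t)))
  (is_derive_mulmx (is_derive_hat (qpert_derive i t)) (qpert_derive j t))).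
have k5 := is_deriveZ (Defs.msum ms i * g * l i)
  (is_derive_mulmx (is_derive_hat (qpert_derive i t)) (mxdiff_cst (e3 R) 0)).
have h := is_deriveB (is_deriveB (is_deriveD k1 k2) (is_derive_sum k3))
  (is_deriveD (is_derive_sum k4) k5).
move: h; set F := (X in is_derive _ _ X _) => h.
transitivity (derive F (0:R) 1); last first.
  case: h => _ ->.
  have sq0 : forall w : 'cV[R]_3, sqnorm (0 *: w) = 0.
    by move=> w; rewrite /sqnorm /dotv scale0r mulmx0 mxE.
  rewrite [X in _ - (X + _)]big1 ?add0r; last first.
    move=> j _; case: ifP => // _; rewrite scaler0 scale0r add0r.
    by rewrite [(_ \*: _) _]/= sq0 scaler0 scale0r.
  rewrite !qpert0 !scale0r !mulmx0 !addr0 add0r [in RHS]big_mkcond.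
  congr (_ - _ - _); apply: eq_bigr => j _; case: ifP => // _.
  by rewrite qpert0 scale0r mulmx0 add0r.
apply: (congr1 (fun f => derive f (0:R) 1)); apply/funext => e.
rewrite /rot_res /F.
congr (_ + _ - _ - (_ + _)).
all: by rewrite big_mkcond fct_sumE; apply: eq_bigr.
Qed.


Lemma is_derive_colmx (f : R -> 'cV[R]_2) (h : 'I_n -> R -> 'cV[R]_3) (t : R) df dh :
  is_derive t 1 f df -> (forall i, is_derive t 1 (h i) (dh i)) ->
  is_derive t 1 (fun e => col_mx (f e) (\mxcol_(i < n) ((Cmx R)^T *m h i e)))
    (col_mx df (\mxcol_(i < n) ((Cmx R)^T *m dh i))).
Proof.
move=> hf hh; apply: is_derive_mx => k c.
have -> : (fun e => col_mx (f e) (\mxcol_(i < n) ((Cmx R)^T *m h i e)) k c) =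
  fun e => match fintype.split k with inl i => f e i c
           | inr i => (\mxcol_(i < n) ((Cmx R)^T *m h i e)) i c end.
  by apply/funext => e; rewrite [LHS]mxE.
rewrite [X in is_derive _ _ _ X]mxE; case: (fintype.split k) => k'.
  exact: is_derive_mxE.
have -> : (fun e => (\mxcol_(i < n) ((Cmx R)^T *m h i e)) k' c) =
  fun e => ((Cmx R)^T *m h (tagnat.sig1 k') e) (tagnat.sig2 k') c.
  by apply/funext => e; rewrite [LHS]mxE.
rewrite [X in is_derive _ _ _ X]mxE.
apply: is_derive_mxE.
apply: (is_derive_lin (L := fun w => (Cmx R)^T *m w)) => //.
by move=> a u v; rewrite mulmxDr scalemxAr.
Qed.


Lemma dw_eq i (hs : s i != 0) (hxi1 : forall t, derivable (xi i) t 1)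
  (hxie3 : forall t, dotv (xi i t) (e3 R) = 0) (hdwe3 : forall t, dotv (dw i t) (e3 R) = 0)
  (hkin : forall t, lin_kin s xi dw i t) t : dw i t = derive1 (xi i) t.
Proof.
have K := hkin t; rewrite /lin_kin in K.
have E1 : (fun t' => derive1 (fun eps => qpert s xi i eps t') 0) =
    fun t' => hat (xi i t') *m (s i *: e3 R).
  by apply/funext => t'; rewrite derive1E; case: (qpert_derive i t') => _ ->.
rewrite E1 in K.
have L : is_derive t 1 (fun t' => hat (xi i t') *m (s i *: e3 R))
    (hat (derive1 (xi i) t) *m (s i *: e3 R)).
  have h := is_derive_mulmx (is_derive_hat (der_of (hxi1 t))) (mxdiff_cst (s i *: e3 R) t).
  by apply: is_derive_eq h _; rewrite mulmx0 addr0.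
have Rr : is_derive (0:R) 1 (fun eps => hat (eps *: dw i t) *m qpert s xi i eps t)
    (hat (dw i t) *m (s i *: e3 R)).
  have h := is_derive_mulmx (is_derive_hat (is_derive_sid (dw i t) 0)) (qpert_derive i t).
  by apply: is_derive_eq h _; rewrite qpert0 scale0r hat0 mul0mx addr0.
move: K; rewrite !derive1E; case: L => _ ->; case: Rr => _ -> K.
apply/esym; rewrite -derive1E; apply: (hat_e3_inj hs K).
rewrite -[dw i t 2%:R 0]dotv_e3 hdwe3.
apply: comp3_zero; first exact: hxi1.
by move=> e; rewrite -dotv_e3.
Qed.


Lemma Vi_eq (hs2 : forall i, s i * s i = 1) (xdd : 'cV[R]_2) (Z Zd : 'I_n -> 'cV[R]_3)
  (hZ : forall j, Z j 2%:R 0 = 0) (hZd : forall j, Zd j 2%:R 0 = 0) i :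
  hat (s i *: e3 R) *m Mi0 ms l i *m xdd + Mij ms l i i *: Zd i
    - \sum_(j < n | j != i) (Mij ms l i j *: (hat (s i *: e3 R) *m hat (s j *: e3 R) *m Zd j))
    - (Defs.msum ms i * g * l i) *: (hat (hat (Z i) *m (s i *: e3 R)) *m e3 R)
  = Cmx R *m ((- s i *: (M0 ms l i *m hat (e3 R) *m Cmx R))^T *m xdd
      + \sum_(j < n) ((s i * s j * Mij ms l i j)%:M *m ((Cmx R)^T *m Zd j))
      + (s i * Defs.msum ms i * g * l i)%:M *m ((Cmx R)^T *m Z i)).
Proof.
rewrite /Mi0 /M0 !mulmxDr mulmx_sumr [X in _ = X + _ + _]mulmxA P1.
under [in RHS]eq_bigr do rewrite mul_scalar_mx -scalemxAr (CCt (hZd _)).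
rewrite mul_scalar_mx -[Cmx R *m _]scalemxAr (CCt (hZ _)) (P3 _ (hZ _)).
under [in LHS]eq_bigr do rewrite (P2 _ _ (hZd _)).
rewrite [in RHS](bigD1 i) //= hs2 mul1r.
rewrite [X in _ - X - _](eq_bigr (fun j => - ((s i * s j * Mij ms l i j) *: Zd j))); last first.
  by move=> j _; rewrite scalerA mulrN scaleNr mulrC.
rewrite sumrN opprK scalerA mulrN scaleNr opprK !addrA.
by congr (_ + _ *: _); rewrite mulrC !mulrA.
Qed.


Lemma hatZ (a : R) (y : 'cV[R]_3) : hat (a *: y) = a *: hat y.
Proof. by rewrite -[a *: y]addr0 hat_lin hat0 addr0. Qed.

Lemma alg (hs2 : forall i, s i * s i = 1) (xdd X u : 'cV[R]_2) (Z Zd : 'I_n -> 'cV[R]_3)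
  (hZ : forall j, Z j 2%:R 0 = 0) (hZd : forall j, Zd j 2%:R 0 = 0) :
  (M00 m ms *: xdd - \sum_(j < n) (M0 ms l j *m hat (s j *: e3 R) *m Zd j) - u = 0 /\
   forall i, hat (s i *: e3 R) *m Mi0 ms l i *m xdd + Mij ms l i i *: Zd i
    - \sum_(j < n | j != i) (Mij ms l i j *: (hat (s i *: e3 R) *m hat (s j *: e3 R) *m Zd j))
    - (Defs.msum ms i * g * l i) *: (hat (hat (Z i) *m (s i *: e3 R)) *m e3 R) = 0)
  <-> Mbig m ms l s *m col_mx xdd (\mxcol_(i < n) ((Cmx R)^T *m Zd i))
     + Gbig g ms l s *m col_mx X (\mxcol_(i < n) ((Cmx R)^T *m Z i)) = Bbig R n *m u.
Proof.
rewrite /Mbig /Gbig /Bbig !mul_block_col mul_col_mx add_col_mx.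
have Etop : Mxx m ms *m xdd + Mxq ms l s *m (\mxcol_(i < n) ((Cmx R)^T *m Zd i))
    + (0 *m X + 0 *m (\mxcol_(i < n) ((Cmx R)^T *m Z i)))
    = M00 m ms *: xdd - \sum_(j < n) (M0 ms l j *m hat (s j *: e3 R) *m Zd j).
  rewrite !mul0mx !addr0 /Mxx mul_scalar_mx /Mxq mul_mxrow_mxcol -sumrN.
  congr (_ + _); apply: eq_bigr => j _.
  rewrite -scalemxAl -mulmxA (CCt (hZd _)) hatZ -scalemxAr -scalemxAl scaleNr.
  by rewrite -!scalemxAl.
set W := fun i => (- s i *: (M0 ms l i *m hat (e3 R) *m Cmx R))^T *m xdd
      + \sum_(j < n) ((s i * s j * Mij ms l i j)%:M *m ((Cmx R)^T *m Zd j))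
      + (s i * Defs.msum ms i * g * l i)%:M *m ((Cmx R)^T *m Z i).
have Ebot : Mqx ms l s *m xdd + Mqq ms l s *m (\mxcol_(i < n) ((Cmx R)^T *m Zd i))
    + (0 *m X + Gqq g ms l s *m (\mxcol_(i < n) ((Cmx R)^T *m Z i)))
    = \mxcol_(i < n) W i.
  rewrite mul0mx add0r /Mqx /Mxq tr_mxrow mxcol_mul /Mqq mxblockEv mxcol_mul.
  rewrite /Gqq mul_mxdiag_mxcol -!mxcolD; apply: eq_mxcol => i.
  by rewrite mul_mxrow_mxcol.
rewrite Etop Ebot mul1mx mul0mx -(mxcol0 (p_ := fun _ : 'I_n => 2%N)).
have Cinj : forall w : 'cV[R]_2, Cmx R *m w = 0 -> w = 0.
  by move=> w Cw; rewrite -[w]mul1mx -CtC -mulmxA Cw mulmx0.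
split.
- move=> [Hc Hr]; congr col_mx.
    by apply/eqP; rewrite -subr_eq0 Hc.
  apply/eq_mxcolP => i; apply: Cinj.
  by rewrite -(Hr i) (Vi_eq hs2 xdd hZ hZd i).
- move=> /eq_col_mx [Ht /eq_mxcolP Hb]; split.
    by rewrite Ht subrr.
  move=> i; have := Hb i; rewrite /W => Hi.
  by rewrite (Vi_eq hs2 xdd hZ hZd i) Hi mulmx0.
Qed.

End Main.


End Aux.

Unset Implicit Arguments.
Local Close Scope classical_set_scope.

Theorem proposition2 (R : realType) (n : nat) (m g : R) (ms l s : 'I_n -> R)
  (hm : 0 < m) (hg : 0 < g) (hms : forall i, 0 < ms i) (hl : forall i, 0 < l i)
  (hs : forall i, s i = 1 \/ s i = -1)
  (dx : R -> 'cV[R]_2) (xi dw : 'I_n -> R -> 'cV[R]_3) (du : R -> 'cV[R]_2)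
  (hdx1 : forall t, derivable dx t 1)
  (hdx2 : forall t, derivable (derive1 dx) t 1)
  (hxi1 : forall i t, derivable (xi i) t 1)
  (hxi2 : forall i t, derivable (derive1 (xi i)) t 1)
  (hdw1 : forall i t, derivable (dw i) t 1)
  (hxie3 : forall i t, dotv (xi i t) (e3 R) = 0)
  (hdwe3 : forall i t, dotv (dw i t) (e3 R) = 0)
  (hkin : forall i t, @lin_kin R n s xi dw i t) :
  (forall t, @lin_cart R n m ms l s dx xi dw du t = 0 /\
             forall i, @lin_rot R n g ms l s dx xi dw i t = 0)
  <->
  (forall t, @Mbig R n m ms l s *m derive1 (derive1 (@bx R n dx xi)) t
             + @Gbig R n g ms l s *m @bx R n dx xi t = @Bbig R n *m du t).
Proof.
have hs0 : forall i, s i != 0.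
  by move=> i; case: (hs i) => ->; rewrite ?oppr_eq0 oner_eq0.
have hs2 : forall i, s i * s i = 1.
  by move=> i; case: (hs i) => ->; rewrite ?mulrNN mulr1.
have Edw : dw = fun i => derive1 (xi i).
  apply/funext => i; apply/funext => t.
  exact: (dw_eq (hs0 i) (hxi1 i) (hxie3 i) (hdwe3 i) (hkin i)).
have bx1 : derive1 (bx dx xi) = fun t => col_mx (derive1 dx t)
    (\mxcol_(i < n) ((Cmx R)^T *m derive1 (xi i) t)).
  apply/funext => t; rewrite derive1E.
  by case: (is_derive_colmx (der_of (hdx1 t)) (fun i => der_of (hxi1 i t))).
have bx2 : forall t, derive1 (derive1 (bx dx xi)) t = col_mx (derive1 (derive1 dx) t)
    (\mxcol_(i < n) ((Cmx R)^T *m derive1 (derive1 (xi i)) t)).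
  move=> t; rewrite bx1 derive1E.
  by case: (is_derive_colmx (der_of (hdx2 t)) (fun i => der_of (hxi2 i t))).
have hZ : forall t j, xi j t 2%:R 0 = 0 by move=> t j; rewrite -dotv_e3.
have hZd : forall t j, derive1 (derive1 (xi j)) t 2%:R 0 = 0.
  move=> t j; apply: comp3_zero => // e.
  by apply: comp3_zero => // e'.
subst dw.
split => H t.
- have [Hc Hr] := H t.
  rewrite bx2 /bx.
  apply: (proj1 (@alg R n m g ms l s hs2 (derive1 (derive1 dx) t) (dx t) (du t) (fun i => xi i t) (fun i => derive1 (derive1 (xi i)) t) (hZ t) (hZd t))).
  split.
    by rewrite lin_cart_val in Hc; exact: Hc.
  by move=> i; have := Hr i; rewrite lin_rot_val; exact.
- have := H t; rewrite bx2 /bx => Ht.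
  have [Hc Hr] := proj2 (@alg R n m g ms l s hs2 (derive1 (derive1 dx) t) (dx t) (du t) (fun i => xi i t) (fun i => derive1 (derive1 (xi i)) t) (hZ t) (hZd t)) Ht.
  split.
    by rewrite lin_cart_val; exact: Hc.
  by move=> i; rewrite lin_rot_val; exact: Hr.
Qed.
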